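(* Let $P=(X,\prec)$ be a finite twin-free interval order containing no induced subposet isomorphic to any of $\mathbf{4}+\mathbf{1}$, $\mathbf{3}+\mathbf{1}+\mathbf{1}$, $Z$, $D$, $Y$, or the dual of $Y$. Then there exists a closed interval representation $\{I(x):x\in X\}$ of $P$ such that: (1) no interval strictly contains two other intervals; (2) no interval is strictly contained in two other intervals; (3) if $I(u)\subsetneq I(v)$ then there are unique $x,y\in X$ such that $x$ peeks into $vu$ from the left and $y$ peeks into $vu$ from the right.
   Context: Posets are strict (irreflexive) partial orders; twins are points with exactly the same comparabilities; twin-free means no two distinct twins. A closed interval representation of $P$ assigns a closed real interval $I(x)=[L(x),R(x)]$ to each $x$ with $x\prec y$ iff $R(x)<L(y)$; $P$ is an interval order if one exists. $I(u)$ is strictly contained in $I(v)$ if $I(u)\subset I(v)$ and they do not have identical endpoints. For $u,v,x$ with $I(u)\subsetneq I(v)$: $x$ peeks into $vu$ if $I(x)$ meets $I(v)$ but not $I(u)$; from the left if moreover $R(x)\le L(u)$; from the right if moreover $R(u)\le L(x)$. Forbidden posets (unlisted, non-transitively-implied pairs incomparable): $\mathbf{4}+\mathbf{1}$: $a\prec b\prec c\prec d$ plus isolated $x$. $\mathbf{3}+\mathbf{1}+\mathbf{1}$: $a\prec b\prec c$ plus isolated $x,y$. $Z$: $a,b,c,d,x,y$ with $a\prec b\prec c\prec d$, $x\prec d$, $a\prec y$. $D$: $a,b,c,d,x$ with $a\prec b\prec d$, $a\prec c\prec d$. $Y$: $a,b,c,d,x$ with $a\prec d\prec b$, $a\prec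 d\prec c$. The dual reverses all comparabilities. *)

(* Defs.v *)
From Stdlib Require Import Reals.
From mathcomp Require Import all_boot.

Set Implicit Arguments.
Unset Strict Implicit.
Unset Printing Implicit Defensive.

Definition strict_order (T : finType) (lt : rel T) : Prop :=
  (forall x, ~~ lt x x) /\ (forall x y z, lt x y -> lt y z -> lt x z).

Definition twins (T : finType) (lt : rel T) (x y : T) : Prop :=
  forall z, lt x z = lt y z /\ lt z x = lt z y.

Definition twin_free (T : finType) (lt : rel T) : Prop :=
  forall x y, twins lt x y -> x = y.

(* Small posets on 'I_n given by the (transitively closed) list of strict pairs. *)
Definition rel_of_pairs (n : nat) (s : seq (nat * nat)) : rel 'I_n :=
  fun i j => (nat_of_ord i, nat_of_ord j) \in s.

Definition P4p1 : rel 'I_5 :=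
  rel_of_pairs [:: (0,1); (0,2); (0,3); (1,2); (1,3); (2,3)].
Definition P3p1p1 : rel 'I_5 :=
  rel_of_pairs [:: (0,1); (0,2); (1,2)].
(* Z : a=0 < b=1 < c=2 < d=3, x=4 < d, a < y=5 *)
Definition PZ : rel 'I_6 :=
  rel_of_pairs [:: (0,1); (0,2); (0,3); (1,2); (1,3); (2,3); (4,3); (0,5)].
(* D : a=0 < b=1 < d=3, a < c=2 < d, x=4 isolated *)
Definition PD : rel 'I_5 :=
  rel_of_pairs [:: (0,1); (0,2); (0,3); (1,3); (2,3)].
(* Y : a=0 < d=3 < b=1, a < d < c=2, x=4 isolated *)
Definition PY : rel 'I_5 :=
  rel_of_pairs [:: (0,3); (3,1); (3,2); (0,1); (0,2)].
Definition PYdual : rel 'I_5 := fun i j => PY j i.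

Definition contains_induced (T : finType) (lt : rel T) (n : nat) (Q : rel 'I_n) : Prop :=
  exists f : 'I_n -> T, injective f /\ forall i j, lt (f i) (f j) = Q i j.

Definition interval_rep (T : finType) (lt : rel T) (lo hi : T -> R) : Prop :=
  (forall x, (Rle (lo x) (hi x))) /\ (forall x y, lt x y <-> (Rlt (hi x) (lo y))).

Definition interval_order (T : finType) (lt : rel T) : Prop :=
  exists lo hi : T -> R, interval_rep lt lo hi.

Definition strictly_in (T : finType) (lo hi : T -> R) (u v : T) : Prop :=
  (Rle (lo v) (lo u)) /\ (Rle (hi u) (hi v)) /\ ~ (lo u = lo v /\ hi u = hi v).

Definition meets (T : finType) (lo hi : T -> R) (x y : T) : Prop :=
  (Rle (lo x) (hi y)) /\ (Rle (lo y) (hi x)).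

Definition peeks (T : finType) (lo hi : T -> R) (x v u : T) : Prop :=
  meets lo hi x v /\ ~ meets lo hi x u.

Definition peeks_left (T : finType) (lo hi : T -> R) (x v u : T) : Prop :=
  peeks lo hi x v u /\ (Rle (hi x) (lo u)).

Definition peeks_right (T : finType) (lo hi : T -> R) (x v u : T) : Prop :=
  peeks lo hi x v u /\ (Rle (hi u) (lo x)).

(* Main.v *)
Require Import Defs.
From Stdlib Require Import Reals Lra Lia.
From mathcomp Require Import all_boot zify.
Set Implicit Arguments.
Unset Strict Implicit.

Lemma K1 N hx ly hy lx : hx < ly -> hy < N -> lx < N ->
  3*N*hx + N + lx + 1 < 3*N*ly + hy.
Proof. nia. Qed.
Lemma K2 N hx ly hy lx : ly <= hx -> hy < N ->
  3*N*ly + hy <= 3*N*hx + N + lx + 1.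
Proof. nia. Qed.
Lemma K3 N l h : l <= h -> h < N -> 3*N*l + h <= 3*N*h + N + l + 1.
Proof. nia. Qed.
Lemma K4 N a b c d : c < N -> d < N -> N*a + c <= N*b + d -> a < b \/ (a = b /\ c <= d).
Proof.
move=> hc hd h. case: (ltngtP a b) => hab; [by left| |].
  exfalso. have : N * b.+1 <= N * a by rewrite leq_mul2l hab orbT. nia.
right; subst; split=> //; lia.
Qed.
Definition Lf (T : finType) (lt : rel T) (x : T) : nat := #|[set y | lt y x]|.
Definition Hf (T : finType) (lt : rel T) (x : T) : nat :=
  \max_(z in [pred z | ~~ lt x z]) Lf lt z.

Lemma chain (T : finType) (lt : rel T) lo hi : interval_rep lt lo hi ->
  forall x y, [set z | lt z x] \subset [set z | lt z y] \/
              [set z | lt z y] \subset [set z | lt z x].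
Proof.
move=> [_ Hr] x y; case: (Rle_or_lt (lo x) (lo y)) => h; [left|right];
  apply/subsetP => z; rewrite !inE => /Hr hz; apply/Hr; lra.
Qed.

Lemma Hwit (T : finType) (lt : rel T) : (forall x, ~~ lt x x) ->
  forall x, exists2 z, ~~ lt x z & Hf lt x = Lf lt z.
Proof.
move=> irr x.
have : 0 < #|[pred z | ~~ lt x z]| by apply/card_gt0P; exists x; rewrite inE irr.
by case/(eq_bigmax_cond (Lf lt)) => z; rewrite inE => hz E; exists z => //; rewrite /Hf E.
Qed.

Lemma LleH (T : finType) (lt : rel T) : (forall x, ~~ lt x x) ->
  forall x, Lf lt x <= Hf lt x.
Proof. move=> irr x; rewrite /Hf; apply: leq_bigmax_cond; by rewrite inE irr. Qed.

Lemma N1 (T : finType) (lt : rel T) lo hi : interval_rep lt lo hi ->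
  (forall x, ~~ lt x x) -> forall x y, lt x y = (Hf lt x < Lf lt y).
Proof.
move=> rep irr x y; apply/idP/idP.
- move=> hxy; case: (Hwit irr x) => z hz ->; rewrite /Lf; apply: proper_card.
  apply/properP; split.
  + have [//|hyz] := chain rep z y.
    have : x \in [set w | lt w z] by apply: (subsetP hyz); rewrite inE.
    by rewrite inE (negbTE hz).
  + by exists x; rewrite !inE // (negbTE hz).
- move=> h; apply/negPn/negP => hn.
  have : Lf lt y <= Hf lt x by rewrite /Hf; apply: leq_bigmax_cond; rewrite inE.
  lia.
Qed.

Lemma Lbound (T : finType) (lt : rel T) x : Lf lt x <= #|T|.
Proof. exact: max_card. Qed.

Lemma Hbound (T : finType) (lt : rel T) : (forall x, ~~ lt x x) ->
  forall x, Hf lt x <= #|T|.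
Proof. move=> irr x; case: (Hwit irr x) => z _ ->; exact: max_card. Qed.

Lemma EA (T : finType) (lt : rel T) u v : Lf lt v < Lf lt u ->
  exists a, lt a u /\ ~~ lt a v.
Proof.
move=> h.
have : ~~ ([set z | lt z u] \subset [set z | lt z v]).
  by apply/negP => /subset_leq_card; rewrite -/(Lf lt u) -/(Lf lt v) leqNgt h.
by case/subsetPn => a; rewrite !inE => h1 h2; exists a.
Qed.

Lemma ED (T : finType) (lt : rel T) lo hi : interval_rep lt lo hi ->
  (forall x, ~~ lt x x) -> forall u v, Hf lt u < Hf lt v ->
  exists d, lt u d /\ ~~ lt v d.
Proof.
move=> rep irr u v h; case: (Hwit irr v) => z hz hv; exists z; split => //.
by rewrite (N1 rep irr) -hv.
Qed.

Definition Nb (T : finType) := #|T|.+2.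
Definition lof (T : finType) (lt : rel T) (x : T) : R :=
  INR (3 * Nb T * Lf lt x + Hf lt x).
Definition hif (T : finType) (lt : rel T) (x : T) : R :=
  INR (3 * Nb T * Hf lt x + Nb T + Lf lt x + 1).

Lemma rep_ok (T : finType) (lt : rel T) lo hi : interval_rep lt lo hi ->
  (forall x, ~~ lt x x) -> interval_rep lt (lof lt) (hif lt).
Proof.
move=> rep irr; split.
- move=> x; apply le_INR; apply/leP; apply: K3; first exact: LleH.
  have := Hbound irr x; rewrite /Nb; lia.
- move=> x y; rewrite (N1 rep irr); split.
  + move=> h; apply lt_INR; apply/ltP; apply: K1 => //.
      have := Hbound irr y; rewrite /Nb; lia.
    have := Lbound lt x; rewrite /Nb; lia.
  + move=> h; apply/negPn/negP => hn; rewrite -leqNgt in hn.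
    have H0 : 3 * Nb T * Lf lt y + Hf lt y <= 3 * Nb T * Hf lt x + Nb T + Lf lt x + 1.
      apply: K2 => //; have := Hbound irr y; rewrite /Nb; lia.
    move/leP/le_INR: H0; rewrite /lof /hif in h; lra.
Qed.

Lemma strict_num (T : finType) (lt : rel T) lo hi : interval_rep lt lo hi ->
  (forall x, ~~ lt x x) -> forall u v,
  strictly_in (lof lt) (hif lt) u v -> Lf lt v < Lf lt u /\ Hf lt u < Hf lt v.
Proof.
move=> rep irr u v [h1 [h2 h3]].
move/INR_le/leP: h1 => h1; move/INR_le/leP: h2 => h2.
have {}h2 : 3 * Nb T * Hf lt u + (Nb T + (Lf lt u + 1)) <=
  3 * Nb T * Hf lt v + (Nb T + (Lf lt v + 1)) by lia.
have bLu := Lbound lt u; have bLv := Lbound lt v.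
have bHu := Hbound irr u; have bHv := Hbound irr v.
have b1 : Hf lt v < 3 * Nb T by rewrite /Nb; lia.
have b2 : Hf lt u < 3 * Nb T by rewrite /Nb; lia.
have b3 : Nb T + (Lf lt u + 1) < 3 * Nb T by rewrite /Nb; lia.
have b4 : Nb T + (Lf lt v + 1) < 3 * Nb T by rewrite /Nb; lia.
have [hA|[e1 c1]] := K4 b1 b2 h1; have [hB|[e2 c2]] := K4 b3 b4 h2; try lia.
exfalso; apply: h3; rewrite /lof /hif e1 e2; split; reflexivity.
Qed.

Lemma meetsE (T : finType) (lt : rel T) lo hi : interval_rep lt lo hi ->
  forall x y, meets lo hi x y <-> ~~ lt x y /\ ~~ lt y x.
Proof.
move=> [hlh hr] x y; rewrite /meets; split.
- case=> h1 h2; split; apply/negP => /hr; lra.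
- case=> /negP h1 /negP h2; split; apply: Rnot_lt_le => h;
    [apply: h2 | apply: h1]; exact/hr.
Qed.

Lemma peeksLE (T : finType) (lt : rel T) lo hi : interval_rep lt lo hi ->
  forall x v u, peeks_left lo hi x v u <-> lt x u /\ ~~ lt x v /\ ~~ lt v x.
Proof.
move=> rep x v u; have [hlh hr] := rep; rewrite /peeks_left /peeks; split.
- case=> [[hm hn] hle]; move/(meetsE rep): hm => [h1 h2]; split => //.
  apply/negPn/negP => hxu; apply: hn; apply/(meetsE rep); split => //.
  apply/negP => /hr hux; have := hlh x; have := hlh u; lra.
- case=> hxu [h1 h2]; split; [split|].
  + by apply/(meetsE rep).
  + by move/(meetsE rep) => []; rewrite hxu.
  + by apply: Rlt_le; apply/hr.
Qed.

Lemma peeksRE (T : finType) (lt : rel T) lo hi : interval_rep lt lo hi ->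
  forall y v u, peeks_right lo hi y v u <-> lt u y /\ ~~ lt y v /\ ~~ lt v y.
Proof.
move=> rep y v u; have [hlh hr] := rep; rewrite /peeks_right /peeks; split.
- case=> [[hm hn] hle]; move/(meetsE rep): hm => [h1 h2]; split => //.
  apply/negPn/negP => huy; apply: hn; apply/(meetsE rep); split => //.
  apply/negP => /hr hyu; have := hlh y; have := hlh u; lra.
- case=> huy [h1 h2]; split; [split|].
  + by apply/(meetsE rep).
  + by move/(meetsE rep) => []; rewrite huy.
  + by apply: Rlt_le; apply/hr.
Qed.
Ltac solve_num N1' := rewrite ?N1'; first [ lia | (apply/negbTE; rewrite -leqNgt; lia) ].
Ltac emb N1' := split;
 [ move=> [[|[|[|[|[|?]]]]] ?] [[|[|[|[|[|?]]]]] ?] //= E;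
   try (apply: val_inj; reflexivity); exfalso; subst;
   first [congruence | lia]
 | move=> [[|[|[|[|[|?]]]]] ?] [[|[|[|[|[|?]]]]] ?] //=;
   match goal with |- _ = ?r => let r' := eval vm_compute in r in change r with r' end;
   solve_num N1' ].

Unset Implicit Arguments.
Theorem proposition13 (T : finType) (lt : rel T) :
  strict_order lt ->
  twin_free lt ->
  interval_order lt ->
  ~ contains_induced lt P4p1 ->
  ~ contains_induced lt P3p1p1 ->
  ~ contains_induced lt PZ ->
  ~ contains_induced lt PD ->
  ~ contains_induced lt PY ->
  ~ contains_induced lt PYdual ->
  exists lo hi : T -> R,
    interval_rep lt lo hi /\
    (forall v u1 u2, strictly_in lo hi u1 v -> strictly_in lo hi u2 v -> u1 = u2) /\
    (forall u v1 v2, strictly_in lo hi u v1 -> strictly_in lo hi u v2 -> v1 = v2) /\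
    (forall u v, strictly_in lo hi u v ->
       (exists! x, peeks_left lo hi x v u) /\ (exists! y, peeks_right lo hi y v u)).
Proof.
move=> [irr tr] _ [lo0 [hi0 rep]] n41 n311 _ nD nY nYd.
have N1' := N1 rep irr.
have LH := LleH irr.
exists (lof lt), (hif lt); split; first exact: rep_ok rep irr.
have SN := strict_num rep irr.
have EA' : forall u v, Lf lt v < Lf lt u ->
    exists a, Hf lt a < Lf lt u /\ Lf lt v <= Hf lt a.
  move=> u v /EA [a [h1 h2]]; exists a.
  by rewrite N1' in h1; rewrite N1' -leqNgt in h2; split.
have ED' : forall u v, Hf lt u < Hf lt v ->
    exists d, Hf lt u < Lf lt d /\ Lf lt d <= Hf lt v.
  move=> u v /(ED rep irr) [d [h1 h2]]; exists d.
  by rewrite N1' in h1; rewrite N1' -leqNgt in h2; split.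
split; [|split].
- move=> v u1 u2 /SN [h1 h2] /SN [h3 h4].
  case: (eqVneq u1 u2) => // /eqP hne; exfalso.
  have [a [ha1 [ha2 ha3]]] : exists a, Hf lt a < Lf lt u1 /\ Hf lt a < Lf lt u2 /\
      Lf lt v <= Hf lt a.
    case: (leqP (Lf lt u1) (Lf lt u2)) => hl;
      [case: (EA' u1 v h1) => a [? ?] | case: (EA' u2 v h3) => a [? ?]];
      exists a; lia.
  have [d [hd1 [hd2 hd3]]] : exists d, Hf lt u1 < Lf lt d /\ Hf lt u2 < Lf lt d /\
      Lf lt d <= Hf lt v.
    case: (leqP (Hf lt u1) (Hf lt u2)) => hl;
      [case: (ED' u2 v h4) => d [? ?] | case: (ED' u1 v h2) => d [? ?]];
      exists d; lia.
  have := LH a; have := LH u1; have := LH u2; have := LH d; have := LH v.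
  move=> ? ? ? ? ?.
  case: (ltnP (Hf lt u1) (Lf lt u2)) => c1.
    apply: n41; exists (fun i => nth a [:: a; u1; u2; d; v] i); emb N1'.
  case: (ltnP (Hf lt u2) (Lf lt u1)) => c2.
    apply: n41; exists (fun i => nth a [:: a; u2; u1; d; v] i); emb N1'.
  apply: nD; exists (fun i => nth a [:: a; u1; u2; d; v] i); emb N1'.
- move=> u v1 v2 /SN [h1 h2] /SN [h3 h4].
  case: (eqVneq v1 v2) => // /eqP hne; exfalso.
  have [a [ha1 [ha2 ha3]]] : exists a, (Hf lt a < Lf lt u) /\ (Lf lt v1 <= Hf lt a) /\ (Lf lt v2 <= Hf lt a).
    case: (leqP (Lf lt v1) (Lf lt v2)) => hl;
      [case: (EA' u v2 h3) => a [? ?] | case: (EA' u v1 h1) => a [? ?]];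
      exists a; lia.
  have [d [hd1 [hd2 hd3]]] : exists d, (Hf lt u < Lf lt d) /\ (Lf lt d <= Hf lt v1) /\ (Lf lt d <= Hf lt v2).
    case: (leqP (Hf lt v1) (Hf lt v2)) => hl;
      [case: (ED' u v1 h2) => d [? ?] | case: (ED' u v2 h4) => d [? ?]];
      exists d; lia.
  have := LH a; have := LH u; have := LH v1; have := LH d; have := LH v2.
  move=> ? ? ? ? ?.
  apply: n311; exists (fun i => nth a [:: a; u; d; v1; v2] i); emb N1'.
- have rep' := rep_ok rep irr.
  move=> u v /SN [h1 h2]; split.
  + have [a [ha1 ha2]] := EA' u v h1.
    exists a; split.
      apply/(peeksLE rep'); rewrite !N1' -!leqNgt; split => //; split; have := LH a; have := LH u; lia.
    move=> x /(peeksLE rep'); rewrite !N1' -!leqNgt => -[hx1 [hx2 hx3]].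
    case: (eqVneq a x) => // /eqP hne; exfalso.
    have [d [hd1 hd2]] := ED' u v h2.
    have := LH a; have := LH u; have := LH x; have := LH d; have := LH v.
    move=> ? ? ? ? ?.
    case: (ltnP (Hf lt a) (Lf lt x)) => c1.
      apply: n41; exists (fun i => nth a [:: a; x; u; d; v] i); emb N1'.
    case: (ltnP (Hf lt x) (Lf lt a)) => c2.
      apply: n41; exists (fun i => nth a [:: x; a; u; d; v] i); emb N1'.
    apply: nYd; exists (fun i => nth a [:: d; a; x; u; v] i); emb N1'.
  + have [d [hd1 hd2]] := ED' u v h2.
    exists d; split.
      apply/(peeksRE rep'); rewrite !N1' -!leqNgt; split => //; split.
        have := LH u; have := LH d; lia.
      lia.
    move=> y /(peeksRE rep'); rewrite !N1' -!leqNgt => -[hy1 [hy2 hy3]].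
    case: (eqVneq d y) => // /eqP hne; exfalso.
    have [a [ha1 ha2]] := EA' u v h1.
    have := LH a; have := LH u; have := LH y; have := LH d; have := LH v.
    move=> ? ? ? ? ?.
    case: (ltnP (Hf lt d) (Lf lt y)) => c1.
      apply: n41; exists (fun i => nth a [:: a; u; d; y; v] i); emb N1'.
    case: (ltnP (Hf lt y) (Lf lt d)) => c2.
      apply: n41; exists (fun i => nth a [:: a; u; y; d; v] i); emb N1'.
    apply: nY; exists (fun i => nth a [:: a; d; y; u; v] i); emb N1'.
Qed.
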